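(* Let $V,E,(v_i),\tau$ and the geodesic graphs $\mathbb{G}_n$ be as in the context, and let $\mathbb{P}$ admit geodesics. Then: (1) almost surely, every finite directed path in $\mathbb{G}_n$ is a geodesic, and it is a subpath of a geodesic ending in $v_n$; (2) if moreover $\mathbb{P}$ has unique passage times, then almost surely each $x\in V\setminus\{v_n\}$ has out-degree $1$ in $\mathbb{G}_n$, and, viewed as an undirected graph, $\mathbb{G}_n$ has no circuits.
   Context: $V\subseteq\mathbb{Z}^2$ infinite, connected, with infinite connected complement; $E$ the nearest-neighbour edges inside $V$; $v_i$ ($i\in\mathbb{Z}$) are the endpoints in $V$ of the edges $e_i$ dual to a fixed doubly infinite self-avoiding dual path $(e_i^* )$ whose removal separates $(V,E)$ as a component of $\mathbb{Z}^2$. $\mathbb{P}$ is a Borel probability on $[0,\infty)^E$; $\tau(\gamma)=\sum_{e\in\gamma}\omega_e$, $\tau(x,y)$ the infimum over paths from $x$ to $y$ in $(V,E)$; a geodesic attains it. $\mathbb{P}$ admits geodesics if for all $x,y\in V$ a geodesic from $x$ to $y$ exists a.s.; $\mathbb{P}$ has unique passage times if a.s. no two distinct nonempty edge paths have equal passage time. $\mathbb{G}_n$ is the directed graph on $V$ containing the directed edge $(x,y)$ iff $\{x,y\}$ lies in a geodesic from some vertex of $V$ to $v_n$ and $\tau(x,v_n)\ge\tau(y,v_n)$. *)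

(* Defs.v *)
From HB Require Import structures.
From mathcomp Require Import all_boot all_order all_algebra.
From mathcomp Require Import all_classical all_reals all_analysis.
Unset Printing Implicit Defensive.
Import Order.TTheory GRing.Theory Num.Theory.
Local Open Scope classical_set_scope.
Local Open Scope ring_scope.

Definition pt := (int * int)%type.

Definition adj (x y : pt) : Prop := (absz (x.1 - y.1) + absz (x.2 - y.2) = 1)%N.

Fixpoint walk_in (A : set pt) (x : pt) (s : seq pt) : Prop :=
  match s with [::] => True | y :: s' => adj x y /\ A y /\ walk_in A y s' end.
Definition set_connected (A : set pt) : Prop :=
  forall x y, A x -> A y -> exists s, walk_in A x s /\ last x s = y.

(* ---------- dual lattice (Z^2 + (1/2,1/2)); dual vertex (a,b) stands for (a+1/2,b+1/2) ---- *)
(* the dual edge {d,d'} crosses the primal edge {p,q} iff their midpoints agree *)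
Definition crosses (d d' p q : pt) : Prop :=
  adj d d' /\ adj p q /\ p.1 + q.1 = d.1 + d'.1 + 1 /\ p.2 + q.2 = d.2 + d'.2 + 1.
Definition same_edge (p q p' q' : pt) : Prop :=
  (p = p' /\ q = q') \/ (p = q' /\ q = p').

(* (V, v) is as in the context: V infinite, connected, with infinite connected complement,
   and there is a doubly infinite self-avoiding dual path (f i)_{i in Z}, with dual edges
   e_i^* = {f i, f (i+1)} crossing primal edges e_i = {p i, q i}, such that V is a connected
   component of Z^2 with the edges e_i removed, and v i is an endpoint of e_i lying in V. *)
Definition setting (V : set pt) (v : int -> pt) : Prop :=
  [/\ infinite_set V, set_connected V, infinite_set (~` V), set_connected (~` V) &
   exists (f : int -> pt) (p q : int -> pt),
     [/\ injective f,
         (forall i, crosses (f i) (f (i + 1)) (p i) (q i)),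
         (forall x y, V x -> adj x y -> ~ (exists i, same_edge x y (p i) (q i)) -> V y),
         (forall x y, V x -> V y -> exists s,
            walk_in V x s /\ last x s = y /\
            forall k, (k < size s)%N ->
              ~ exists i, same_edge (nth x (x :: s) k) (nth x s k) (p i) (q i)) &
         (forall i, V (v i) /\ (v i = p i \/ v i = q i))]].

(* edge key (z, false) = {z, z + (1,0)},  (z, true) = {z, z + (0,1)} *)
Definition ekey_ends (k : pt * bool) : pt * pt :=
  (k.1, if k.2 then (k.1.1, k.1.2 + 1) else (k.1.1 + 1, k.1.2)).
Definition ekey (x y : pt) : pt * bool :=
  if y == (x.1 + 1, x.2) then (x, false)
  else if y == (x.1, x.2 + 1) then (x, true)
  else if x == (y.1 + 1, y.2) then (y, false)
  else (y, true).

Definition inE (V : set pt) (k : pt * bool) : Prop := V (ekey_ends k).1 /\ V (ekey_ends k).2.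
Definition Edge (V : set pt) := {k : pt * bool | inE V k}.

(* the weight of a lattice edge key (0 outside E; never used outside E) *)
Definition wt {R : realType} {V : set pt} (om : Edge V -> R) (k : pt * bool) : R :=
  match pselect (inE V k) with left h => om (exist _ k h) | right _ => 0 end.

(* ---------- sample space [0,oo)^E as a subset of R^E with the product sigma-algebra ---- *)
Definition RE (R : realType) (I : Type) := I -> R.
HB.instance Definition _ (R : realType) (I : Type) := gen_eqMixin (RE R I).
HB.instance Definition _ (R : realType) (I : Type) := gen_choiceMixin (RE R I).
HB.instance Definition _ (R : realType) (I : Type) :=
  isPointed.Build (RE R I) (fun _ => 0).
Definition coord_sets (R : realType) (I : Type) : set (set (RE R I)) :=
  \bigcup_(i in [set: I]) preimage_set_system [set: RE R I] (fun w => w i) measurable.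
Notation prodR R I := (g_sigma_algebraType (@coord_sets R I)).

Definition is_path (V : set pt) (x : pt) (s : seq pt) : Prop := V x /\ walk_in V x s.
Definition path_from_to (V : set pt) (x y : pt) (s : seq pt) : Prop :=
  is_path V x s /\ last x s = y.

Fixpoint ptime {R : realType} (w : pt * bool -> R) (x : pt) (s : seq pt) : R :=
  match s with [::] => 0 | y :: s' => w (ekey x y) + ptime w y s' end.

Definition tau {R : realType} (V : set pt) (om : Edge V -> R) (x y : pt) : R :=
  inf [set t | exists s, path_from_to V x y s /\ t = ptime (wt om) x s].

Definition geodesic {R : realType} (V : set pt) (om : Edge V -> R) (x y : pt) (s : seq pt)
  : Prop := path_from_to V x y s /\ ptime (wt om) x s = tau V om x y.

Definition path_uses (x : pt) (s : seq pt) (a b : pt) : Prop :=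
  ((a, b) \in zip (x :: s) s) \/ ((b, a) \in zip (x :: s) s).

Definition pedges (x : pt) (s : seq pt) : seq (pt * bool) :=
  [seq ekey e.1 e.2 | e <- zip (x :: s) s].

Definition admits_geodesics {R : realType} (V : set pt) (P : probability (prodR R (Edge V)) R)
  : Prop := forall x y, V x -> V y -> {ae P, forall om, exists s, geodesic V om x y s}.

Definition unique_passage_times {R : realType} (V : set pt)
  (P : probability (prodR R (Edge V)) R) : Prop :=
  {ae P, forall om : prodR R (Edge V), forall x s x' s',
     is_path V x s -> is_path V x' s' -> s <> [::] -> s' <> [::] ->
     uniq (x :: s) -> uniq (x' :: s') -> ~ (pedges x s =i pedges x' s') ->
     ptime (wt om) x s <> ptime (wt om) x' s'}.

Definition Gedge {R : realType} (V : set pt) (om : Edge V -> R) (z x y : pt) : Prop :=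
  (exists u s, V u /\ geodesic V om u z s /\ path_uses u s x y) /\
  tau V om y z <= tau V om x z.

Definition Gpath {R : realType} (V : set pt) (om : Edge V -> R) (z x : pt) (s : seq pt) : Prop :=
  V x /\ forall e, e \in zip (x :: s) s -> Gedge V om z e.1 e.2.

Definition Gcircuit {R : realType} (V : set pt) (om : Edge V -> R) (z x : pt) (s : seq pt)
  : Prop :=
  (3 <= size (x :: s))%N /\ uniq (x :: s) /\
  forall e, e \in zip (x :: s) (rcons s x) -> Gedge V om z e.1 e.2 \/ Gedge V om z e.2 e.1.

(* Main.v *)
Require Import Defs.
From HB Require Import structures.
From mathcomp Require Import all_boot all_order all_algebra.
From mathcomp Require Import all_classical all_reals all_analysis.
From mathcomp Require Import zify.
Import Order.TTheory GRing.Theory Num.Theory.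
Local Open Scope classical_set_scope.
Local Open Scope ring_scope.


Lemma adj_cases (x y : pt) : adj x y ->
  y = (x.1+1, x.2) \/ y = (x.1, x.2+1) \/ x = (y.1+1, y.2) \/ x = (y.1, y.2+1).
Proof.
case: x y => [a b] [c d]; rewrite /adj /=.
move=> h.
have: (c = a + 1 /\ d = b) \/ (c = a /\ d = b+1) \/ (a = c+1 /\ b = d) \/ (a = c /\ b = d+1).
  lia.
by case=> [[-> ->]|[[-> ->]|[[-> ->]|[-> ->]]]]; auto.
Qed.

Lemma adj_sym x y : adj x y -> adj y x.
Proof. case: x y => [a b] [c d]; rewrite /adj /=; lia. Qed.

Lemma adj_neq x y : adj x y -> x <> y.
Proof. case: x y => [a b] [c d]; rewrite /adj /= => h [e1 e2]; subst; lia. Qed.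

Lemma ekey_spec x y : adj x y ->
  ekey_ends (ekey x y) = (x,y) \/ ekey_ends (ekey x y) = (y,x).
Proof.
move=> h; rewrite /ekey.
case: ifP => [/eqP ->|h1]; first by left.
case: ifP => [/eqP ->|h2]; first by left.
case: ifP => [/eqP ->|h3]; first by right.
right; rewrite /ekey_ends /=.
case: (adj_cases _ _ h) => [e|[e|[e|e]]].
- by rewrite e eqxx in h1.
- by rewrite e eqxx in h2.
- by rewrite e eqxx in h3.
- by rewrite -e; case: (y).
Qed.

Lemma ekey_ends_inj : injective ekey_ends.
Proof.
move=> [[a b] []] [[c d] []]; rewrite /ekey_ends /= => -[] e1 e2 e3 e4;
  subst => //; lia.
Qed.

Lemma ekey_ends_nrev k k' a b : ekey_ends k = (a,b) -> ekey_ends k' = (b,a) -> False.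
Proof.
move: k k' => [[p q] []] [[r s] []]; rewrite /ekey_ends /= => -[] ea eb [] ec ed;
  subst a b; case: ec => ??; case: ed => ??; lia.
Qed.

Lemma ekey_sym x y : adj x y -> ekey x y = ekey y x.
Proof.
move=> h; have h' := adj_sym _ _ h.
case: (ekey_spec _ _ h) => e1; case: (ekey_spec _ _ h') => e2;
  try (by apply: ekey_ends_inj; rewrite e1 e2);
  exfalso; exact: ekey_ends_nrev _ _ _ _ e1 e2.
Qed.

Lemma ekey_inj x y a b : adj x y -> adj a b -> ekey x y = ekey a b ->
  (x = a /\ y = b) \/ (x = b /\ y = a).
Proof.
move=> h h' e; have := congr1 ekey_ends e.
case: (ekey_spec _ _ h) => ->; case: (ekey_spec _ _ h') => -> [] -> ->; auto.
Qed.

Lemma walk_cat V x s1 s2 :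
  walk_in V x (s1 ++ s2) <-> walk_in V x s1 /\ walk_in V (last x s1) s2.
Proof.
elim: s1 x => [|y s1 IH] x /=; first by split=> // -[].
rewrite IH; split; [by case=> [? [? []]]| by case=> [[? [? ?]] ?]].
Qed.

Lemma walk_last V x s : V x -> walk_in V x s -> V (last x s).
Proof. by elim: s x => [|y s IH] x //= _ [_ [Vy w]]; apply: IH. Qed.

Lemma ptime_cat (R : realType) (w : pt * bool -> R) x s1 s2 :
  ptime w x (s1 ++ s2) = ptime w x s1 + ptime w (last x s1) s2.
Proof. by elim: s1 x => [|y s1 IH] x /=; rewrite ?add0r // IH addrA. Qed.

Lemma wt_ge0 (R : realType) V (om : Edge V -> R) k :
  (forall e, 0 <= om e) -> 0 <= wt om k.
Proof. by move=> nn; rewrite /wt; case: pselect. Qed.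

Lemma ptime_ge0 (R : realType) V (om : Edge V -> R) x s :
  (forall e, 0 <= om e) -> 0 <= ptime (wt om) x s.
Proof.
move=> nn; elim: s x => [|y s IH] x //=; apply: addr_ge0 => //; exact: wt_ge0.
Qed.

Lemma tau_lb (R : realType) V (om : Edge V -> R) x y s :
  (forall e, 0 <= om e) -> path_from_to V x y s -> tau V om x y <= ptime (wt om) x s.
Proof.
move=> nn p; apply: ge_inf; last by exists s.
by exists 0 => t [s' [_ ->]]; apply: ptime_ge0.
Qed.

Lemma geo_of_min (R : realType) V (om : Edge V -> R) x y s :
  path_from_to V x y s ->
  (forall s', path_from_to V x y s' -> ptime (wt om) x s <= ptime (wt om) x s') ->
  geodesic V om x y s.
Proof.
move=> p m; split => //; apply/eqP; rewrite eq_le; apply/andP; split.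
- by apply: lb_le_inf; [exists (ptime (wt om) x s); exists s| move=> t [s' [p' ->]]; apply: m].
- apply: ge_inf; last by exists s.
  by exists (ptime (wt om) x s) => t [s' [p' ->]]; apply: m.
Qed.

Lemma geo_min (R : realType) V (om : Edge V -> R) x y s s' :
  (forall e, 0 <= om e) -> geodesic V om x y s -> path_from_to V x y s' ->
  ptime (wt om) x s <= ptime (wt om) x s'.
Proof. by move=> nn [_ ->]; apply: tau_lb. Qed.

Lemma geo_suffix (R : realType) V (om : Edge V -> R) u z s1 s2 :
  (forall e, 0 <= om e) -> geodesic V om u z (s1 ++ s2) ->
  geodesic V om (last u s1) z s2.
Proof.
move=> nn g; have [[[Vu w] l] _] := g.
have /walk_cat [w1 w2] := w.
have p2 : path_from_to V (last u s1) z s2.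
  by split; [split=> //; apply: walk_last | rewrite last_cat in l].
apply: geo_of_min => // s' p'.
have p'' : path_from_to V u z (s1 ++ s').
  case: p' => [[_ w'] l']; split; first by split=> //; apply/walk_cat.
  by rewrite last_cat.
have := geo_min _ _ _ _ _ _ _ nn g p''.
by rewrite !ptime_cat lerD2l.
Qed.

Lemma geo_prefix (R : realType) V (om : Edge V -> R) u z s1 s2 :
  (forall e, 0 <= om e) -> geodesic V om u z (s1 ++ s2) ->
  geodesic V om u (last u s1) s1.
Proof.
move=> nn g; have [[[Vu w] l] _] := g.
have /walk_cat [w1 w2] := w.
have p1 : path_from_to V u (last u s1) s1 by [].
apply: geo_of_min => // s' [[_ w'] l'].
have p'' : path_from_to V u z (s' ++ s2).
  split; first by split=> //; apply/walk_cat; rewrite l'.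
  by rewrite last_cat l' -last_cat.
have := geo_min _ _ _ _ _ _ _ nn g p''.
by rewrite !ptime_cat l' lerD2r.
Qed.

Lemma zip_split (a b u : pt) s : (a, b) \in zip (u :: s) s ->
  exists s1 s2, s = s1 ++ b :: s2 /\ last u s1 = a.
Proof.
elim: s u => [|y s IH] u //=; rewrite in_cons => /orP [/eqP [-> ->]|/IH [s1 [s2 [e l]]]].
  by exists [::], s.
by exists (y :: s1), s2; rewrite e.
Qed.

Lemma zip_adj V (a b u : pt) s : walk_in V u s -> (a, b) \in zip (u :: s) s ->
  [/\ adj a b, V b & (V u -> V a)].
Proof.
elim: s u => [|y s IH] u //= [h [Vy w]]; rewrite in_cons => /orP [/eqP [-> ->]|/(IH _ w)] //.
by case=> ? ? ?; split=> // _; auto.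
Qed.

Lemma Gedge_tau (R : realType) V (om : Edge V -> R) z a b :
  (forall e, 0 <= om e) -> Gedge V om z a b ->
  [/\ adj a b, V a, V b & tau V om a z = wt om (ekey a b) + tau V om b z].
Proof.
move=> nn [[u [s [Vu [g pu]]]] le].
have [[[_ w] _] _] := g.
have key : forall a b, (a, b) \in zip (u :: s) s ->
    [/\ adj a b, V a, V b & tau V om a z = wt om (ekey a b) + tau V om b z].
  move=> a' b' /[dup] ab /zip_split [s1 [s2 [e l]]].
  have [? ? ?] := zip_adj _ _ _ _ _ w ab.
  split; auto.
  rewrite e in g.
  have [_] := geo_suffix _ _ _ _ _ _ _ nn g; rewrite l => <-.
  have g2 : geodesic V om u z ((rcons s1 b') ++ s2) by rewrite cat_rcons.
  have [_] := geo_suffix _ _ _ _ _ _ _ nn g2; rewrite last_rcons => <-.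
  by [].
case: pu => [/key //|/key [h Vb Va e]]; split; auto using adj_sym.
have w0 : wt om (ekey b a) = 0.
  apply/eqP; rewrite eq_le wt_ge0 // andbT.
  by rewrite -(lerD2r (tau V om a z)) -e add0r.
by rewrite e w0 add0r -(ekey_sym _ _ h) w0 add0r.
Qed.

Lemma Gpath_tau (R : realType) V (om : Edge V -> R) z x s :
  (forall e, 0 <= om e) -> Gpath V om z x s ->
  is_path V x s /\ tau V om x z = ptime (wt om) x s + tau V om (last x s) z.
Proof.
move=> nn; elim: s x => [|y s IH] x [Vx h] /=; first by rewrite add0r.
have [a _ Vy e] := Gedge_tau _ _ _ _ _ _ nn (h (x, y) (mem_head _ _)).
have [[_ w] e'] : is_path V y s /\ tau V om y z = ptime (wt om) y s + tau V om (last y s) z.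
  apply: IH; split=> // p hp; apply: h; by rewrite /= in_cons hp orbT.
by split; [|rewrite e e' addrA].
Qed.

Lemma part1_det (R : realType) V (om : Edge V -> R) z x s :
  (forall e, 0 <= om e) -> (forall y, V y -> exists g, geodesic V om y z g) ->
  Gpath V om z x s ->
  geodesic V om x (last x s) s /\
  exists u t, geodesic V om u z t /\ infix (x :: s) (u :: t).
Proof.
move=> nn geo gp; have [[Vx w] e] := Gpath_tau _ _ _ _ _ _ nn gp.
have [g [[[_ wg] lg] eg]] := geo _ (walk_last _ _ _ Vx w).
have G : geodesic V om x z (s ++ g).
  split; first by split; [split=> //; apply/walk_cat | rewrite last_cat].
  by rewrite ptime_cat e eg.
split; first exact: geo_prefix _ _ _ _ _ _ _ nn G.
by exists x, (s ++ g); split=> //; apply: (prefix_infix (x :: s) g).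
Qed.

Definition upt_at {R : realType} V (om : Edge V -> R) : Prop :=
  forall x s x' s',
     is_path V x s -> is_path V x' s' -> s <> [::] -> s' <> [::] ->
     uniq (x :: s) -> uniq (x' :: s') -> ~ (pedges x s =i pedges x' s') ->
     ptime (wt om) x s <> ptime (wt om) x' s'.

Lemma wt_nz3 (R : realType) V (om : Edge V -> R) a b q :
  upt_at V om -> V a -> V b -> V q -> adj a b -> adj b q -> a <> q ->
  wt om (ekey a b) <> 0.
Proof.
move=> U Va Vb Vq hab hbq aq w0.
have ab : a != b by apply/eqP; exact: adj_neq.
have bq : b != q by apply/eqP; exact: adj_neq.
have aq' : a != q by apply/eqP.
apply: (U a [:: b; q] b [:: q]) => //.
- by rewrite /= !inE negb_or ab aq' bq.
- by rewrite /= !inE bq.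
- move=> E; have := E (ekey a b); rewrite /pedges /= !inE eqxx /=.
  move=> /esym/eqP e.
  by case: (ekey_inj _ _ _ _ hab hbq e) => -[e1 e2]; [move: ab; rewrite e1 e2 eqxx| ].
- by rewrite /= w0 add0r.
Qed.

Lemma exit_walk V (S : pt -> Prop) x s : walk_in V x s -> S x -> ~ S (last x s) ->
  exists p q, [/\ S p, ~ S q, adj p q & V q].
Proof.
elim: s x => [|y s IH] x /=; first by move=> _ Sx [].
move=> [h [Vy w]] Sx nS.
case: (pselect (S y)) => Sy; first exact: IH w Sy nS.
by exists x, y.
Qed.

Lemma pos_wt (R : realType) V (om : Edge V -> R) a b :
  (forall e, 0 <= om e) -> upt_at V om -> infinite_set V -> set_connected V ->
  V a -> V b -> adj a b -> 0 < wt om (ekey a b).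
Proof.
move=> nn U inf conn Va Vb hab.
rewrite lt_neqAle wt_ge0 // andbT; apply/eqP => /esym w0.
have [c [Vc nc]] := infinite_setN0 (infinite_setD inf (finite_set2 a b)).
have [s [w l]] := conn a c Va Vc.
have [p [q [Sp nSq hpq Vq]]] :=
  exit_walk V (fun p => p = a \/ p = b) a s w (or_introl erefl) ltac:(by rewrite l).
have qa : q <> a by move=> e; apply: nSq; left.
have qb : q <> b by move=> e; apply: nSq; right.
case: Sp => ep; rewrite ep in hpq.
- apply: (wt_nz3 _ _ _ _ _ _ U Vb Va Vq (adj_sym _ _ hab) hpq (nesym qb)).
  by rewrite -(ekey_sym _ _ hab).
- exact: (wt_nz3 _ _ _ _ _ _ U Va Vb Vq hab hpq (nesym qa)).
Qed.

Lemma loop_remove (x : pt) s : x \in s ->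
  exists s2 s3, [/\ s = s2 ++ s3, s2 <> [::] & last x s2 = x].
Proof.
case/path.splitP => p1 p2; exists (rcons p1 x), p2; split=> //.
- by case: p1.
- by rewrite last_rcons.
Qed.

Lemma ptime_pos (R : realType) V (om : Edge V -> R) x s :
  (forall e, 0 <= om e) ->
  (forall a b, V a -> V b -> adj a b -> 0 < wt om (ekey a b)) ->
  V x -> walk_in V x s -> s <> [::] -> 0 < ptime (wt om) x s.
Proof.
move=> nn pos; case: s => [|y s] //= Vx [h [Vy _]] _.
by apply: ltr_wpDr; [apply: ptime_ge0| apply: pos].
Qed.

Lemma shorten_walk (R : realType) V (om : Edge V -> R) x s :
  (forall e, 0 <= om e) ->
  (forall a b, V a -> V b -> adj a b -> 0 < wt om (ekey a b)) ->
  V x -> walk_in V x s -> ~~ uniq (x :: s) ->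
  exists s', [/\ walk_in V x s', last x s' = last x s &
                 ptime (wt om) x s' < ptime (wt om) x s].
Proof.
move=> nn pos; elim: s x => [|y s IH] x //.
move=> Vx w; rewrite [uniq _]/= negb_and negbK => /orP [xin|nu].
- have [s2 [s3 [e ne l]]] := loop_remove x _ xin.
  rewrite e in w *; have /walk_cat [w2 w3] := w.
  exists s3; rewrite l in w3; split=> //; first by rewrite last_cat l.
  rewrite ptime_cat l ltrDr; exact: ptime_pos w2 ne.
- case: w => [h [Vy w]].
  have [s' [w' l' lt']] := IH y Vy w nu.
  by exists (y :: s'); split=> //=; rewrite ltrD2l.
Qed.

Lemma geo_uniq (R : realType) V (om : Edge V -> R) x y s :
  (forall e, 0 <= om e) ->
  (forall a b, V a -> V b -> adj a b -> 0 < wt om (ekey a b)) ->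
  geodesic V om x y s -> uniq (x :: s).
Proof.
move=> nn pos g; have [[[Vx w] l] _] := g.
apply/negPn/negP => nu.
have [s' [w' l' lt']] := shorten_walk _ _ _ _ _ nn pos Vx w nu.
have : path_from_to V x y s' by split; [|rewrite l'].
move=> /(geo_min _ _ _ _ _ _ _ nn g); rewrite leNgt lt' //.
Qed.

Lemma zip_mem (a b u : pt) s : (a, b) \in zip (u :: s) s -> a \in u :: s /\ b \in u :: s.
Proof.
move=> /zip_split [s1 [s2 [e l]]]; rewrite e; split.
- have := mem_last u s1; rewrite l in_cons => /orP [/eqP ->|h]; first by rewrite mem_head.
  by rewrite in_cons mem_cat h !orbT.
- by rewrite in_cons mem_cat in_cons eqxx !orbT.
Qed.

Lemma geo_step (R : realType) V (om : Edge V -> R) z x y :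
  (forall e, 0 <= om e) -> (forall y, V y -> exists g, geodesic V om y z g) ->
  Gedge V om z x y -> exists g, geodesic V om x z (y :: g).
Proof.
move=> nn geo ge; have [h Vx Vy e] := Gedge_tau _ _ _ _ _ _ nn ge.
have [g [[[_ wg] lg] eg]] := geo y Vy.
exists g; split; first by split.
by rewrite /= eg e.
Qed.

Lemma outdeg_uniq (R : realType) V (om : Edge V -> R) z x y1 y2 :
  (forall e, 0 <= om e) ->
  (forall a b, V a -> V b -> adj a b -> 0 < wt om (ekey a b)) ->
  (forall y, V y -> exists g, geodesic V om y z g) -> upt_at V om ->
  Gedge V om z x y1 -> Gedge V om z x y2 -> y1 = y2.
Proof.
move=> nn pos geo U G1 G2.
have [h1 Vx Vy1 _] := Gedge_tau _ _ _ _ _ _ nn G1.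
have [h2 _ Vy2 _] := Gedge_tau _ _ _ _ _ _ nn G2.
have [g1 P1] := geo_step _ _ _ _ _ _ nn geo G1.
have [g2 P2] := geo_step _ _ _ _ _ _ nn geo G2.
case: (eqVneq y1 y2) => // ne; exfalso.
have u1 := geo_uniq _ _ _ _ _ _ nn pos P1.
have u2 := geo_uniq _ _ _ _ _ _ nn pos P2.
have [[p1 _] t1] := P1; have [[p2 _] t2] := P2.
apply: (U x (y1 :: g1) x (y2 :: g2)) => //; last by rewrite t1 t2.
move=> E; have := E (ekey x y1); rewrite /pedges /= in_cons eqxx /=.
move=> /esym; rewrite in_cons => /orP [/eqP e|/mapP [[a b] ab e]].
- case: (ekey_inj _ _ _ _ h1 h2 e) => -[e1 e2]; first by rewrite e2 eqxx in ne.
  by apply: (adj_neq _ _ h1).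
- have [_ [_ [_ wg2]]] := p2.
  have [hab _ _] := zip_adj _ _ _ _ _ wg2 ab.
  have [ma mb] := zip_mem _ _ _ _ ab.
  move: u2; rewrite [uniq _]/= => /andP [nx _].
  case: (ekey_inj _ _ _ _ h1 hab e) => -[e1 _]; rewrite e1 in nx.
  + by rewrite ma in nx.
  + by rewrite mb in nx.
Qed.

Lemma outdeg_exists (R : realType) V (om : Edge V -> R) z x :
  (forall e, 0 <= om e) ->
  (forall y, V y -> exists g, geodesic V om y z g) ->
  V x -> x <> z -> exists y, Gedge V om z x y.
Proof.
move=> nn geo Vx xz; have [g G] := geo x Vx.
case: g G => [|y g] G; first by case: G => -[_ l]; case: xz.
exists y; split.
  exists x, (y :: g); split=> //; split=> //; left; by rewrite /= in_cons eqxx.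
have G2 : geodesic V om x z ([:: y] ++ g) by [].
have [_ <-] := geo_suffix _ _ _ _ _ _ _ nn G2.
case: G => _ <-; rewrite /= lerDr; exact: wt_ge0.
Qed.

Lemma path_of_zip (T : eqType) (r : rel T) x t :
  (forall e, e \in zip (x :: t) t -> r e.1 e.2) -> path r x t.
Proof.
elim: t x => [|y t IH] x //= h; apply/andP; split.
- by apply: (h (x, y)); rewrite in_cons eqxx.
- by apply: IH => e he; apply: h; rewrite in_cons he orbT.
Qed.

Lemma zip_rcons_l (T : Type) (a b : seq T) y : size a = size b ->
  zip (rcons a y) b = zip a b.
Proof.
elim: a b => [|x a IH] [|z b] //= [] e; by rewrite IH.
Qed.

Lemma argmax_seq (R : realType) (f : pt -> R) (p : seq pt) : p <> [::] ->
  exists2 m, m \in p & forall y, y \in p -> f y <= f m.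
Proof.
elim: p => [|x p IH] // _.
case: p IH => [|x' p] IH.
  by exists x; rewrite ?mem_head // => y; rewrite inE => /eqP ->.
have [m mp hm] := IH ltac:(by []).
case: (leP (f x) (f m)) => hx.
- exists m; first by rewrite in_cons mp orbT.
  by move=> y; rewrite in_cons => /orP [/eqP ->|/hm].
- exists x; first by rewrite mem_head.
  move=> y; rewrite in_cons => /orP [/eqP ->//|/hm hy].
  by apply: le_trans hy (ltW hx).
Qed.

Lemma next_ne_prev (p : seq pt) m : uniq p -> (3 <= size p)%N -> m \in p ->
  next p m <> prev p m.
Proof.
move=> u sz mp e.
have nn : next p (next p m) = m by rewrite e next_prev.
have [i s' rs] := rot_to mp.
have u' : uniq (m :: s') by rewrite -rs rot_uniq.
have := size_rot i p; rewrite rs => ss.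
rewrite -!(next_rot i u) rs in nn.
case: s' rs u' ss nn => [|a [|b r]] rs u' ss; try by rewrite -ss in sz.
move: u'; rewrite /= !inE !negb_or => /andP [/andP [ma /andP [mb _]] /andP [/andP [ab _] _]].
rewrite /= eqxx eq_sym (negbTE ma) eqxx => bm.
by rewrite bm eqxx in mb.
Qed.

Lemma Gedge_lt (R : realType) V (om : Edge V -> R) z a b :
  (forall e, 0 <= om e) ->
  (forall a b, V a -> V b -> adj a b -> 0 < wt om (ekey a b)) ->
  Gedge V om z a b -> tau V om b z < tau V om a z.
Proof.
move=> nn pos G; have [h Va Vb e] := Gedge_tau _ _ _ _ _ _ nn G.
by rewrite e ltrDr; apply: pos.
Qed.

Lemma no_circuit (R : realType) V (om : Edge V -> R) z x s :
  (forall e, 0 <= om e) ->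
  (forall a b, V a -> V b -> adj a b -> 0 < wt om (ekey a b)) ->
  (forall y, V y -> exists g, geodesic V om y z g) -> upt_at V om ->
  ~ Gcircuit V om z x s.
Proof.
move=> nn pos geo U [sz [u H]].
pose r := fun a b : pt => `[< Gedge V om z a b \/ Gedge V om z b a >].
have cyc : cycle r (x :: s).
  rewrite /cycle; apply: path_of_zip => e.
  rewrite -[x :: rcons s x]/(rcons (x :: s) x) zip_rcons_l; last by rewrite size_rcons.
  by move=> /H h; apply/asboolP.
have [m mp hm] := argmax_seq _ (fun y => tau V om y z) (x :: s) ltac:(by []).
have hn := next_cycle cyc mp; have hp := prev_cycle cyc mp.
have Gn : Gedge V om z m (next (x :: s) m).
  case/asboolP: hn => // G; have := Gedge_lt _ _ _ _ _ _ nn pos G.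
  by rewrite ltNge hm // mem_next.
have Gp : Gedge V om z m (prev (x :: s) m).
  case/asboolP: hp => // G; have := Gedge_lt _ _ _ _ _ _ nn pos G.
  by rewrite ltNge hm // mem_prev.
apply: (next_ne_prev _ _ u sz mp).
exact: outdeg_uniq _ _ _ _ _ _ _ nn pos geo U Gn Gp.
Qed.
Theorem proposition3p1 (R : realType) (V : set pt) (v : int -> pt)
  (P : probability (prodR R (Edge V)) R) (n : int) :
  setting V v ->
  (* P is a Borel probability on [0,oo)^E *)
  {ae P, forall om : prodR R (Edge V), forall e, 0 <= om e} ->
  admits_geodesics V P ->
  (* (1) *)
  {ae P, forall om : prodR R (Edge V), forall x s,
     Gpath V om (v n) x s ->
     geodesic V om x (last x s) s /\
     exists u t, geodesic V om u (v n) t /\ infix (x :: s) (u :: t)} /\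
  (* (2) *)
  (unique_passage_times V P ->
   {ae P, forall om : prodR R (Edge V),
      (forall x, V x -> x <> v n -> exists! y, Gedge V om (v n) x y) /\
      (forall x s, ~ Gcircuit V om (v n) x s)}).
Proof.
move=> [inf conn _ _ [f [p [q [_ _ _ _ hv]]]]] nnae AG.
have Vz : V (v n) by case: (hv n).
have FF : Filter (almost_everywhere P) := ae_filter_ringOfSetsType P.
have GEO : {ae P, forall om : prodR R (Edge V),
    forall y, V y -> exists g, geodesic V om y (v n) g}.
  have : {ae P, forall om : prodR R (Edge V), forall k : nat,
      match (unpickle k : option pt) with
      | Some y => V y -> exists g, geodesic V om y (v n) g
      | None => True end}.
    apply: ae_foralln => k; case: (unpickle k) => [y|]; last exact: aeW.
    case: (pselect (V y)) => Vy; last by apply: aeW => om /Vy.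
    by apply: (filterS (F := almost_everywhere P) _ (AG y (v n) Vy Vz)) => om h _.
  apply: filterS => om h y; have := h (pickle y); by rewrite pickleK.
split.
  apply: filterS2 nnae GEO => om nn geo x s gp.
  exact: part1_det _ _ _ _ _ _ nn geo gp.
move=> UPT.
apply: filterS3 nnae GEO UPT => om nn geo U.
have pos : forall a b, V a -> V b -> adj a b -> 0 < wt om (ekey a b).
  by move=> a b Va Vb h; apply: pos_wt.
split.
- move=> x Vx xz; have [y G] := outdeg_exists _ _ _ _ _ nn geo Vx xz.
  exists y; split=> // y' G'.
  exact: outdeg_uniq _ _ _ _ _ _ _ nn pos geo U G G'.
- by move=> x s; apply: no_circuit.
Qed.
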